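(* Let $m,n\in\mathbb{N}$ with $m\le n$. There exists $f_{n,m}\in\mathcal{NN}_{1,m+1}(2^{m+2}+1,1)$ such that for every $x=\sum_{i=1}^n2^{-i}x_i$ with $x_1,\dots,x_n\in\{0,1\}$, \[ f_{n,m}(x)=\Big(x_1,\dots,x_m,\ \sum_{i=m+1}^n 2^{m-i}x_i\Big)^\top. \] Moreover, for every $L\in\mathbb{N}$ there exists $f_{n,m,L}\in\mathcal{NN}_{1,2}(2^{\lceil m/L\rceil+2}+2,L)$ such that for every such $x$, \[ f_{n,m,L}(x)=\Big(\sum_{i=1}^m2^{m-i}x_i,\ \sum_{i=m+1}^n 2^{m-i}x_i\Big)^\top. \]
   Context: $\mathcal{NN}_{d,k}(W,L)$: set of maps $g:\mathbb{R}^d\to\mathbb{R}^k$ given by $g_0(x)=x$, $g_{\ell+1}(x)=\sigma(A_\ell g_\ell(x)+b_\ell)$ ($\ell=0,\dots,L-1$), $g(x)=A_Lg_L(x)+b_L$, with $A_\ell\in\mathbb{R}^{N_{\ell+1}\times N_\ell}$, $b_\ell\in\mathbb{R}^{N_{\ell+1}}$, $N_0=d$, $N_{L+1}=k$, $\max\{N_1,\dots,N_L\}\le W$, $\sigma(t)=\max\{t,0\}$ componentwise. In binary notation, the first output of $f_{n,m,L}$ is $\mathrm{Bin}\,x_1\cdots x_m.0$ and the last outputs are $\mathrm{Bin}\,0.x_{m+1}\cdots x_n$. *)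

(* Defs.v *)
From HB Require Import structures.
From mathcomp Require Import all_boot all_order all_algebra.
From mathcomp Require Import Rstruct.
Set Implicit Arguments. Unset Strict Implicit. Unset Printing Implicit Defensive.
Import Order.TTheory GRing.Theory Num.Theory.
Local Open Scope ring_scope.

Section Nets.
Variable R : realDomainType.

Definition relu_vec n (v : 'cV[R]_n) : 'cV[R]_n :=
  \col_i Num.max (v i 0) 0.

Inductive net : nat -> nat -> Type :=
| NOut : forall d k, 'M[R]_(k, d) -> 'cV[R]_k -> net d k
| NLayer : forall d N k, 'M[R]_(N, d) -> 'cV[R]_N -> net N k -> net d k.

Fixpoint realize d k (Phi : net d k) : 'cV[R]_d -> 'cV[R]_k :=
  match Phi in net d k return 'cV[R]_d -> 'cV[R]_k with
  | NOut _ _ A b => fun x => A *m x + b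
  | NLayer _ _ _ A b rest => fun x => realize rest (relu_vec (A *m x + b))
  end.

Fixpoint depth d k (Phi : net d k) : nat :=
  match Phi with
  | NOut _ _ _ _ => 0
  | NLayer _ _ _ _ _ rest => (depth rest).+1
  end.

Fixpoint width d k (Phi : net d k) : nat :=
  match Phi with
  | NOut _ _ _ _ => 0
  | NLayer _ N _ _ _ rest => maxn N (width rest)
  end.

Definition NN (d k W L : nat) (g : 'cV[R]_d -> 'cV[R]_k) : Prop :=
  exists Phi : net d k,
    [/\ depth Phi = L, (width Phi <= W)%N & forall x, g x = realize Phi x].

End Nets.

Definition ceil_div (m L : nat) : nat := (m + L.-1) %/ L.

(* Main.v *)
Require Import Defs.
From HB Require Import structures.
From mathcomp Require Import all_boot all_order all_algebra.
From mathcomp Require Import Rstruct.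
From mathcomp Require Import zify ring lra.
Import Order.TTheory GRing.Theory Num.Theory.
Local Open Scope ring_scope.
Set Implicit Arguments. Unset Strict Implicit.

Local Notation RR := Rdefinitions.R.

Definition stv (a y : RR) : 'cV[RR]_2 :=
  \col_(i < 2) (if (i : nat) == 0%N then a else y).

Definition dlt (g : nat -> RR) (k : nat) : RR := g k - (0 < k)%:R * g k.-1.

Lemma step_eq (M k q : nat) :
  Num.max ((M%:R - (k*q)%:R + 1) : RR) 0 - Num.max (M%:R - (k*q)%:R) 0
  = ((k * q <= M)%N)%:R.
Proof.
case: leqP => h.
  rewrite -natrB // max_l; last by rewrite addr_ge0.
  by rewrite max_l ?ler0n // addrC addKr.
have h1 : (M.+1 <= k * q)%N by [].
have h2 : (M%:R + 1 <= (k*q)%:R :> RR) by rewrite natr1 ler_nat.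
rewrite max_r; last by lra.
by rewrite max_r ?subrr //; lra.
Qed.

Lemma tele_sum (g : nat -> RR) K : \sum_(0 <= k < K.+1) dlt g k = g K.
Proof.
elim: K => [|K IH]; first by rewrite big_nat1 /dlt /= mul0r subr0.
by rewrite big_nat_recr //= IH /dlt /= mul1r addrC subrK.
Qed.

Lemma tele (g : nat -> RR) (T0 q M : nat) : (0 < q)%N -> (M %/ q < T0)%N ->
  \sum_(k < T0) dlt g k * ((k * q <= M)%N)%:R = g (M %/ q)%N.
Proof.
move=> q0 hK.
rewrite -(big_mkord xpredT (fun k => dlt g k * ((k * q <= M)%N)%:R)) (@big_cat_nat _ _ _ (M %/ q)%N.+1 0 T0 _ _ (leq0n _) hK) /=.
rewrite [X in _ + X]big_nat_cond [X in _ + X]big1 ?addr0; last first.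
  move=> k /andP[/andP[hk _] _]; by rewrite -leq_divRL // leqNgt hk mulr0.
rewrite -(tele_sum g (M %/ q)%N); apply: eq_big_nat => k /andP[_ hk].
by rewrite -leq_divRL // -ltnS hk mulr1.
Qed.

Section Layer.
Variable T' : nat.
Local Notation T := T'.+1.
Local Notation N := (T + T + 1)%N.

Definition Bm : 'M[RR]_(N, 2) :=
  \matrix_(i, j) (if (i < T + T)%N then ((j : nat) == 1%N)%:R
                  else ((j : nat) == 0%N)%:R).

Definition bv (q : nat) : 'cV[RR]_N :=
  \col_i (if (i < T)%N then 1 - (i * q)%:R
          else if (i < T + T)%N then - ((i - T) * q)%:R else 0).

Definition Cm (k : nat) (g : 'I_k -> nat -> RR) (e1 e2 : 'I_k -> RR)
  : 'M[RR]_(k, N) :=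
  \matrix_(o, i) (if (i < T)%N then dlt (g o) i
                  else if (i < T + T)%N then
                     - dlt (g o) (i - T) + ((i : nat) == T)%:R * e1 o
                  else e2 o).

Lemma pre_eq q A M (i : 'I_N) : (Bm *m stv A M + bv q) i 0 =
  if (i < T)%N then M - (i*q)%:R + 1
  else if (i < T+T)%N then M - ((i-T)*q)%:R else A.
Proof.
rewrite !mxE big_ord_recl big_ord1 !mxE /=.
case: ifP => h1.
  by case: ifP => h2 /=; rewrite ?mulr1n; ring.
have -> : (i < T)%N = false by lia.
by ring.
Qed.

Lemma comb k (g : 'I_k -> nat -> RR) e1 e2 (A M q : nat) (o : 'I_k) :
  (0 < q)%N -> (M %/ q < T)%N ->
  (Cm g e1 e2 *m relu_vec (Bm *m stv A%:R M%:R + bv q)) o 0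
  = g o (M %/ q)%N + e1 o * M%:R + e2 o * A%:R.
Proof.
move=> q0 hK.
set h := relu_vec _.
have hE i : h i 0 = Num.max ((Bm *m stv A%:R M%:R + bv q) i 0) 0
  by rewrite /h mxE.
rewrite [LHS]mxE big_split_ord /= big_split_ord /= big_ord1.
rewrite !hE !pre_eq /=.
have e3 : ((T + T + 0 < T)%N = false) by lia.
have e4 : ((T + T + 0 < T + T)%N = false) by lia.
rewrite e3 e4 (max_l (ler0n _ _)).
have -> : \sum_(i < T) Cm g e1 e2 o (lshift 1 (lshift T i)) *
   h (lshift 1 (lshift T i)) 0 =
   \sum_(i < T) dlt (g o) i * Num.max (M%:R - (i * q)%:R + 1) 0.
  apply: eq_bigr => i _; rewrite hE pre_eq !mxE /= ltn_ord //.
have -> : \sum_(i < T) Cm g e1 e2 o (lshift 1 (rshift T i)) *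
   h (lshift 1 (rshift T i)) 0 =
   \sum_(i < T) (- dlt (g o) i * Num.max (M%:R - (i * q)%:R) 0
                 + ((i : nat) == 0%N)%:R * e1 o * Num.max (M%:R - (i * q)%:R) 0).
  apply: eq_bigr => i _; rewrite hE pre_eq !mxE /=.
  have -> : (T + i < T)%N = false by lia.
  have -> : (T + i < T + T)%N = true by rewrite ltn_add2l ltn_ord.
  have -> : (T + i - T)%N = i by lia.
  have -> : (T + i == T)%N = (i == 0%N :> nat) by apply/eqP/eqP; lia.
  by ring.
rewrite !mxE e3 e4.
rewrite big_split /=.
have -> : \sum_(i < T) ((i : nat) == 0%N)%:R * e1 o * Num.max (M%:R - (i * q)%:R) 0
    = e1 o * M%:R.
  rewrite big_ord_recl /= big1 ?addr0; last by move=> i _; rewrite mul0r mul0r.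
  by rewrite mul0n subr0 (max_l (ler0n _ _)) mul1r.
rewrite addrA -big_split /=.
rewrite -(tele (g o) q0 hK); congr (_ + _ + _).
apply: eq_bigr => i _; rewrite -step_eq; ring.
Qed.

End Layer.

Section Val.
Variable xb : nat -> bool.
Local Open Scope nat_scope.

Definition bval (a b : nat) : nat := \sum_(a <= i < b) xb i.+1 * 2 ^ (b - i.+1).

Lemma bval_split a c b : a <= c -> c <= b -> bval a b = bval a c * 2 ^ (b - c) + bval c b.
Proof.
move=> hac hcb; rewrite /bval (@big_cat_nat _ _ _ c a b _ _ hac hcb) /=; congr (_ + _).
rewrite big_distrl /=; apply: eq_big_nat => i /andP[_ hi].
by rewrite -mulnA -expnD; congr (_ * 2 ^ _); lia.
Qed.

Lemma bval_nn a : bval a a = 0.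
Proof. by rewrite /bval big_geq. Qed.

Lemma bval1 a : bval a a.+1 = xb a.+1.
Proof. by rewrite /bval big_nat1 subnn muln1. Qed.

Lemma bval_lt a k : bval a (a + k) < 2 ^ k.
Proof.
elim: k => [|k IH]; first by rewrite addn0 bval_nn.
rewrite addnS (bval_split (c := a + k)) ?leq_addr // subSn // subnn.
rewrite bval1 expnS expn0.
rewrite expnS; case: (xb _) => /=; lia.
Qed.

Lemma bval_lt' a b : a <= b -> bval a b < 2 ^ (b - a).
Proof. by move=> h; have := bval_lt a (b - a); rewrite subnKC. Qed.

Lemma bval_div a c b : a <= c -> c <= b -> bval a b %/ 2 ^ (b - c) = bval a c.
Proof.
move=> h1 h2; rewrite (bval_split h1 h2) divnMDl ?expn_gt0 //.
by rewrite divn_small ?addn0 // bval_lt'.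
Qed.

Lemma bval_mod a c b : a <= c -> c <= b -> bval a b %% 2 ^ (b - c) = bval c b.
Proof.
move=> h1 h2; rewrite (bval_split h1 h2) modnMDl.
by rewrite modn_small // bval_lt'.
Qed.



End Val.

Lemma two_pow_neq0 k : (2%:R : RR) ^+ k != 0.
Proof. by rewrite expf_neq0 // pnatr_eq0. Qed.

Lemma rsum_frac (xb : nat -> bool) a b : (a <= b)%N ->
  \sum_(a.+1 <= i < b.+1) (2%:R ^- (i - a)) * (xb i)%:R
  = (bval xb a b)%:R / (2%:R : RR) ^+ (b - a).
Proof.
move=> hab; rewrite big_add1 /= /bval natr_sum mulr_suml.
apply: eq_big_nat => i /andP[h1 h2].
rewrite natrM natrX.
have -> : (b - a = (b - i.+1) + (i.+1 - a))%N by lia.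
rewrite exprD.
have := two_pow_neq0 (b - i.+1); have := two_pow_neq0 (i.+1 - a).
move=> n1 n2; field.
by rewrite n1 n2.
Qed.

Lemma rsum_int (xb : nat -> bool) m :
  \sum_(1 <= i < m.+1) (2%:R ^+ (m - i)) * (xb i)%:R = (bval xb 0 m)%:R :> RR.
Proof.
rewrite big_add1 /= /bval natr_sum.
apply: eq_big_nat => i _; rewrite natrM natrX mulrC //.
Qed.

Definition Xm (n : nat) : 'M[RR]_(2, 1) :=
  \matrix_(i, j) (if (i : nat) == 0%N then 0 else (2%:R : RR) ^+ n).

Lemma Xm_eq n s : Xm n *m const_mx s = stv (0%N)%:R (2%:R ^+ n * s).
Proof.
apply/matrixP => i j; rewrite !mxE big_ord1 !mxE.
by case: ifP => _; rewrite ?mul0r ?mulr0n.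
Qed.

Lemma input_eq (xb : nat -> bool) n :
  2%:R ^+ n * (\sum_(1 <= i < n.+1) (2%:R ^- i) * (xb i)%:R) = (bval xb 0 n)%:R :> RR.
Proof.
have -> : \sum_(1 <= i < n.+1) (2%:R ^- i) * (xb i)%:R
   = \sum_(1 <= i < n.+1) (2%:R ^- (i - 0)) * (xb i)%:R :> RR.
  by apply: eq_bigr => i _; rewrite subn0.
rewrite rsum_frac // subn0; have := two_pow_neq0 n => h; field.
exact: h.
Qed.

Lemma part1 (m n : nat) (hmn : (m <= n)%N) :
  (exists f : 'cV[Rdefinitions.R]_1 -> 'cV[Rdefinitions.R]_m.+1,
     NN (2 ^ (m + 2) + 1) 1 f /\
     forall xb : nat -> bool,
       f (const_mx (\sum_(1 <= i < n.+1) (2%:R ^- i) * (xb i)%:R)) =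
       \col_(j < m.+1)
          (if (j < m)%N then (xb j.+1)%:R
           else \sum_(m.+1 <= i < n.+1) (2%:R ^- (i - m)) * (xb i)%:R)).
Proof.
pose T' := (2 ^ m).-1.
have hT : T'.+1 = (2 ^ m)%N by rewrite prednK // expn_gt0.
pose q := (2 ^ (n - m))%N.
pose g (o : 'I_m.+1) (K : nat) : RR :=
  if (o < m)%N then ((K %/ 2 ^ (m - o.+1)) %% 2)%N%:R else - K%:R.
pose e1 (o : 'I_m.+1) : RR := if (o < m)%N then 0 else (2%:R ^+ (n - m))^-1.
pose e2 (o : 'I_m.+1) : RR := 0.
pose Phi := NLayer (Bm T' *m Xm n) (bv T' q) (NOut (Cm T' g e1 e2) 0).
exists (realize Phi); split.
  exists Phi; split => //=.
  rewrite maxn0 hT expnD; lia.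
move=> xb /=; rewrite -mulmxA Xm_eq input_eq addr0.
apply/matrixP => o j; rewrite ord1.
have q0 : (0 < q)%N by rewrite expn_gt0.
have hdiv : (bval xb 0 n %/ q)%N = bval xb 0 m by rewrite bval_div.
have hK : (bval xb 0 n %/ q < T'.+1)%N.
  by rewrite hdiv hT; have := bval_lt' xb (leq0n m); rewrite subn0.
rewrite (comb (T' := T') g e1 e2 0 o q0 hK) hdiv !mxE /g /e1 /e2 mulr0 addr0.
case: ifP => ho.
  rewrite mul0r addr0 bval_div //.
  have := bval_mod xb (leq0n o) (leqnSn o); rewrite subSn // subnn expn1 => ->.
  by rewrite bval1.
rewrite rsum_frac // (bval_split xb (leq0n m) hmn) natrD natrM natrX.
have := two_pow_neq0 (n - m) => h; field.
exact: h.
Qed.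

Section Part2.
Variables (m n s : nat).
Hypothesis hmn : (m <= n)%N.
Local Notation T' := (2 ^ s).-1.
Local Notation N := (T'.+1 + T'.+1 + 1)%N.

Definition Dd (l : nat) : nat := minn m (s * l).
Definition qq (l : nat) : nat := (2 ^ (n - Dd l.+1))%N.

Definition Sm (l : nat) : 'M[RR]_(2, N) :=
  Cm T' (fun (o : 'I_2) (K : nat) =>
           if (o : nat) == 0%N then K%:R else - (K * qq l)%N%:R)
        (fun o => if (o : nat) == 0%N then 0 else 1)
        (fun o => if (o : nat) == 0%N then 2%:R ^+ (Dd l.+1 - Dd l) else 0).

Lemma Dd_le l : (Dd l <= Dd l.+1)%N.
Proof. rewrite /Dd mulnS; lia. Qed.
Lemma Dd_n l : (Dd l <= n)%N.
Proof. rewrite /Dd; lia. Qed.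
Lemma Dd_s l : (Dd l.+1 - Dd l <= s)%N.
Proof. rewrite /Dd mulnS; lia. Qed.

Lemma layer_step (xb : nat -> bool) l :
  Sm l *m relu_vec (Bm T' *m stv (bval xb 0 (Dd l))%:R (bval xb (Dd l) n)%:R
                    + bv T' (qq l))
  = stv (bval xb 0 (Dd l.+1))%:R (bval xb (Dd l.+1) n)%:R.
Proof.
have q0 : (0 < qq l)%N by rewrite expn_gt0.
have hdiv : (bval xb (Dd l) n %/ qq l)%N = bval xb (Dd l) (Dd l.+1).
  by rewrite bval_div ?Dd_le ?Dd_n.
have hK : (bval xb (Dd l) n %/ qq l < T'.+1)%N.
  rewrite hdiv prednK ?expn_gt0 //.
  apply: (leq_trans (bval_lt' xb (Dd_le l))).
  by apply: leq_pexp2l => //; apply: Dd_s.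
apply/matrixP => o j; rewrite ord1.
rewrite (comb _ _ _ _ o q0 hK) hdiv !mxE.
case: ifP => ho.
  rewrite (bval_split xb (leq0n (Dd l)) (Dd_le l)) natrD natrM natrX; ring.
rewrite (bval_split xb (Dd_le l) (Dd_n l.+1)) natrD !natrM /qq; ring.
Qed.

Definition Dm : 'M[RR]_2 :=
  \matrix_(i, j) (if (i : nat) == 0%N then ((j : nat) == 0%N)%:R
                  else ((j : nat) == 1%N)%:R * (2%:R ^+ (n - m))^-1).

Fixpoint tailnet (k l : nat) : net RR N 2 :=
  match k with
  | 0 => NOut (Dm *m Sm l) 0
  | k'.+1 => NLayer (Bm T' *m Sm l) (bv T' (qq l.+1)) (tailnet k' l.+1)
  end.

Lemma tail_depth k l : depth (tailnet k l) = k.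
Proof. by elim: k l => [|k IH] l //=; rewrite IH. Qed.

Lemma tail_width k l : (width (tailnet k l) <= N)%N.
Proof. elim: k l => [|k IH] l //=; rewrite geq_max leqnn IH //. Qed.

Lemma tail_real (xb : nat -> bool) k l h :
  Sm l *m h = stv (bval xb 0 (Dd l.+1))%:R (bval xb (Dd l.+1) n)%:R ->
  realize (tailnet k l) h =
  Dm *m stv (bval xb 0 (Dd (l + k).+1))%:R (bval xb (Dd (l + k).+1) n)%:R.
Proof.
elim: k l h => [|k IH] l h hS /=.
  by rewrite addn0 -mulmxA hS addr0.
rewrite -mulmxA hS -[(l + k.+1)%N]addSnnS; apply: IH.
exact: layer_step.
Qed.

End Part2.

Lemma ceil_ge (m L : nat) : (0 < L)%N -> (m <= ceil_div m L * L)%N.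
Proof.
move=> hL; rewrite /ceil_div.
have := divn_eq (m + L.-1) L; have := ltn_pmod (m + L.-1) hL.
set a := ((m + L.-1) %/ L)%N; set b := ((m + L.-1) %% L)%N; lia.
Qed.

Lemma part2 (m n : nat) (hmn : (m <= n)%N) :
  (forall L : nat, (1 <= L)%N ->
   exists f : 'cV[Rdefinitions.R]_1 -> 'cV[Rdefinitions.R]_2,
     NN (2 ^ (ceil_div m L + 2) + 2) L f /\
     forall xb : nat -> bool,
       f (const_mx (\sum_(1 <= i < n.+1) (2%:R ^- i) * (xb i)%:R)) =
       \col_(j < 2)
          (if j == 0 :> 'I_2
           then \sum_(1 <= i < m.+1) (2%:R ^+ (m - i)) * (xb i)%:R
           else \sum_(m.+1 <= i < n.+1) (2%:R ^- (i - m)) * (xb i)%:R)).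
Proof.
move=> L hL.
set s := ceil_div m L.
pose Phi := NLayer (Bm (2 ^ s).-1 *m Xm n) (bv (2 ^ s).-1 (qq m n s 0))
                   (tailnet m n s L.-1 0).
have hT : ((2 ^ s).-1.+1 = 2 ^ s)%N by rewrite prednK // expn_gt0.
exists (realize Phi); split.
  exists Phi; split => //=.
    by rewrite tail_depth prednK.
  rewrite geq_max; apply/andP; split.
    by rewrite hT expnD; lia.
  apply: leq_trans (tail_width _ _ _ _ _) _; rewrite hT expnD; lia.
move=> xb /=; rewrite -mulmxA Xm_eq input_eq.
have hD0 : Dd m s 0 = 0%N by rewrite /Dd muln0 minn0.
have := @layer_step m n s hmn xb 0; rewrite hD0 bval_nn => h0.
rewrite (@tail_real m n s hmn xb L.-1 0 _ h0) add0n prednK //.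
have -> : Dd m s L = m by rewrite /Dd; have := ceil_ge m hL; rewrite -/s mulnC; lia.
apply/matrixP => i j; rewrite ord1 !mxE big_ord_recl big_ord1 !mxE.
rewrite rsum_int rsum_frac //.
case: i => [[|[|i]]] hi //=.
  by ring.
ring.
Qed.

Theorem mainTheorem5 (m n : nat) (hmn : (m <= n)%N) :
  (exists f : 'cV[Rdefinitions.R]_1 -> 'cV[Rdefinitions.R]_m.+1,
     NN (2 ^ (m + 2) + 1) 1 f /\
     forall xb : nat -> bool,
       f (const_mx (\sum_(1 <= i < n.+1) (2%:R ^- i) * (xb i)%:R)) =
       \col_(j < m.+1)
          (if (j < m)%N then (xb j.+1)%:R
           else \sum_(m.+1 <= i < n.+1) (2%:R ^- (i - m)) * (xb i)%:R))
  /\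
  (forall L : nat, (1 <= L)%N ->
   exists f : 'cV[Rdefinitions.R]_1 -> 'cV[Rdefinitions.R]_2,
     NN (2 ^ (ceil_div m L + 2) + 2) L f /\
     forall xb : nat -> bool,
       f (const_mx (\sum_(1 <= i < n.+1) (2%:R ^- i) * (xb i)%:R)) =
       \col_(j < 2)
          (if j == 0 :> 'I_2
           then \sum_(1 <= i < m.+1) (2%:R ^+ (m - i)) * (xb i)%:R
           else \sum_(m.+1 <= i < n.+1) (2%:R ^- (i - m)) * (xb i)%:R)).
Proof. split; [exact: part1 | exact: part2]. Qed.
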